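(* There exist constants $\epsilon_1'>0$, $\tau_1'>0$ and $C>0$, depending only on $\underline{U}=(1,0)^{\top}$ and $a_\infty$, such that the following holds for all $\tau\in(0,\tau_1')$ and all states $U_L,\hat U_R,U_R$ in the $\epsilon_1'$-neighborhood of $\underline{U}$. (a) If $U_R=\Phi(\beta_1,\beta_2;U_L)$ and $U_R=\Phi(\alpha_1,\alpha_2;U_L,\tau^2)$, then $|\beta_j-\alpha_j|\le C(|\alpha_1|+|\alpha_2|)\tau^2$ for $j=1,2$. (b) If $U_R=\Phi(\beta_1,\beta_2;U_L)$, $\hat U_R=\Phi(\alpha_1,\alpha_2;U_L,\tau^2)$ and $\alpha=|U_R-\hat U_R|$, then $|\beta_j-\alpha_j|\le C(|\alpha_1|+|\alpha_2|)\tau^2+C\alpha$ for $j=1,2$.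
   Context: Fix $\gamma>1$ and $a_\infty>0$; states are $U=(\rho,v)^{\top}$. Velocity function. For $\tau>0$ let $$u(\rho,v;\tau^2)=\tau^{-2}\Big(-1+\sqrt{1-\tau^2\big(v^2+\tfrac{2(\rho^{\gamma-1}-1)}{(\gamma-1)a_\infty^2}\big)}\Big),$$ and let $u(\rho,v;0)=-\tfrac12v^2-\tfrac{\rho^{\gamma-1}-1}{(\gamma-1)a_\infty^2}$. Systems. Set $G(U,\tau^2)=(\rho(1+\tau^2u),v)^{\top}$ and $F(U,\tau^2)=(\rho v,-u)^{\top}$, and consider $\partial_xG(U,\tau^2)+\partial_yF(U,\tau^2)=0$. The $\tau=0$ system is $\partial_xU+\partial_yF(U,0)=0$. Near $\underline{U}$ and for small $\tau\ge0$ these systems are strictly hyperbolic, with characteristic speeds $\lambda_1<\lambda_2$ and genuinely nonlinear fields. Let $r_k(U,\tau^2)$ be the right eigenvectors, normalized by $\nabla_U\lambda_k\cdot r_k=1$. Wave curves. For $k=1,2$, $\Phi_k(\alpha;U,\tau^2)$ denotes the $k$-th physically admissible wave curve through $U$: - it is the Lax shock curve for $\alpha<0$ and the rarefaction curve for $\alpha>0$; - it is $C^2$ in $(\alpha,U,\tau^2)$; - $\Phi_k(0;U,\tau^2)=U$ and $\partial_\alpha\Phi_k(0;U,\tau^2)=r_k(U,\tau^2)$. Write $\Phi_k(\alpha;U):=\Phi_k(\alpha;U,0)$ for the $\tau=0$ system. Compositions: - $\Phi(\alpha_1,\alpha_2;U,\tau^2)=\Phi_2(\alpha_2;\Phi_1(\alpha_1;U,\tau^2),\tau^2)$;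 - $\Phi(\beta_1,\beta_2;U)=\Phi_2(\beta_2;\Phi_1(\beta_1;U))$. *)

(* Defs.v *)
From Stdlib Require Import Reals.
From Coquelicot Require Import Coquelicot.
Open Scope R_scope.

(** States U = (rho, v). *)
Definition state : Type := (R * R)%type.

Definition Ubar : state := (1, 0).

Definition dist2 (U V : state) : R :=
  sqrt ((fst U - fst V) ^ 2 + (snd U - snd V) ^ 2).

Definition near_Ubar (eps : R) (U : state) : Prop := dist2 U Ubar < eps.

(** Velocity function u(rho, v; t), t = tau^2 (t > 0 formula, t = 0 limit). *)
Definition uvel (gam ainf : R) (U : state) (t : R) : R :=
  let rho := fst U in let v := snd U in
  if Rlt_dec 0 t then
    / t * (-1 + sqrt (1 - t * (v ^ 2
        + 2 * (Rpower rho (gam - 1) - 1) / ((gam - 1) * ainf ^ 2))))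
  else
    - / 2 * v ^ 2 - (Rpower rho (gam - 1) - 1) / ((gam - 1) * ainf ^ 2).

Definition Gfun (gam ainf : R) (U : state) (t : R) : state :=
  (fst U * (1 + t * uvel gam ainf U t), snd U).
Definition Ffun (gam ainf : R) (U : state) (t : R) : state :=
  (fst U * snd U, - uvel gam ainf U t).

Definition d_rho (f : state -> R) (U : state) : R :=
  Derive (fun x => f (x, snd U)) (fst U).
Definition d_v (f : state -> R) (U : state) : R :=
  Derive (fun y => f (fst U, y)) (snd U).
Definition ex_d_rho (f : state -> R) (U : state) : Prop :=
  ex_derive (fun x => f (x, snd U)) (fst U).
Definition ex_d_v (f : state -> R) (U : state) : Prop :=
  ex_derive (fun y => f (fst U, y)) (snd U).

(** (lam, r) is a characteristic pair of  dG U_x + dF U_y = 0  at (U,t):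
    dF(U,t) r = lam dG(U,t) r. *)
Definition char_pair (gam ainf : R) (lam : R) (r : state) (U : state) (t : R)
  : Prop :=
  let G1 := fun W => fst (Gfun gam ainf W t) in
  let G2 := fun W => snd (Gfun gam ainf W t) in
  let F1 := fun W => fst (Ffun gam ainf W t) in
  let F2 := fun W => snd (Ffun gam ainf W t) in
  d_rho F1 U * fst r + d_v F1 U * snd r
    = lam * (d_rho G1 U * fst r + d_v G1 U * snd r) /\
  d_rho F2 U * fst r + d_v F2 U * snd r
    = lam * (d_rho G2 U * fst r + d_v G2 U * snd r).

Definition in_box (delta : R) (U : state) : Prop :=
  Rabs (fst U - 1) < delta /\ Rabs (snd U) < delta.

Definition char_fields (gam ainf : R) (lam1 lam2 : state -> R -> R)
  (r1 r2 : state -> R -> state) : Prop :=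
  exists delta, 0 < delta /\
  forall U t, in_box delta U -> 0 <= t < delta ->
    lam1 U t < lam2 U t /\
    char_pair gam ainf (lam1 U t) (r1 U t) U t /\
    char_pair gam ainf (lam2 U t) (r2 U t) U t /\
    ex_d_rho (fun W => lam1 W t) U /\ ex_d_v (fun W => lam1 W t) U /\
    ex_d_rho (fun W => lam2 W t) U /\ ex_d_v (fun W => lam2 W t) U /\
    d_rho (fun W => lam1 W t) U * fst (r1 U t)
      + d_v (fun W => lam1 W t) U * snd (r1 U t) = 1 /\
    d_rho (fun W => lam2 W t) U * fst (r2 U t)
      + d_v (fun W => lam2 W t) U * snd (r2 U t) = 1.

(** C^2 regularity of functions of four real variables (alpha, rho, v, t):
    all partial derivatives up to order 2 exist and all of them (and the
    function) are jointly continuous. *)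
Definition pd (i : nat) (g : R -> R -> R -> R -> R) : R -> R -> R -> R -> R :=
  fun x1 x2 x3 x4 =>
  match i with
  | O => Derive (fun y => g y x2 x3 x4) x1
  | 1%nat => Derive (fun y => g x1 y x3 x4) x2
  | 2%nat => Derive (fun y => g x1 x2 y x4) x3
  | _ => Derive (fun y => g x1 x2 x3 y) x4
  end.
Definition ex_pd (i : nat) (g : R -> R -> R -> R -> R) (x1 x2 x3 x4 : R) : Prop :=
  match i with
  | O => ex_derive (fun y => g y x2 x3 x4) x1
  | 1%nat => ex_derive (fun y => g x1 y x3 x4) x2
  | 2%nat => ex_derive (fun y => g x1 x2 y x4) x3
  | _ => ex_derive (fun y => g x1 x2 x3 y) x4
  end.
Definition cont4 (g : R -> R -> R -> R -> R) (x1 x2 x3 x4 : R) : Prop :=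
  forall eps, 0 < eps -> exists d, 0 < d /\
  forall y1 y2 y3 y4, Rabs (y1 - x1) < d -> Rabs (y2 - x2) < d ->
    Rabs (y3 - x3) < d -> Rabs (y4 - x4) < d ->
    Rabs (g y1 y2 y3 y4 - g x1 x2 x3 x4) < eps.
Definition C2_at (g : R -> R -> R -> R -> R) (x1 x2 x3 x4 : R) : Prop :=
  cont4 g x1 x2 x3 x4 /\
  forall i, ex_pd i g x1 x2 x3 x4 /\ cont4 (pd i g) x1 x2 x3 x4 /\
  forall j, ex_pd j (pd i g) x1 x2 x3 x4 /\ cont4 (pd j (pd i g)) x1 x2 x3 x4.

Definition C2_family (Phi : R -> state -> R -> state) (delta : R) : Prop :=
  forall a rho v t, Rabs a < delta -> Rabs (rho - 1) < delta ->
    Rabs v < delta -> Rabs t < delta ->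
    C2_at (fun a' rho' v' t' => fst (Phi a' (rho', v') t')) a rho v t /\
    C2_at (fun a' rho' v' t' => snd (Phi a' (rho', v') t')) a rho v t.

Definition rankine_hugoniot (gam ainf : R) (s : R) (UL UR : state) (t : R)
  : Prop :=
  s * (fst (Gfun gam ainf UR t) - fst (Gfun gam ainf UL t))
    = fst (Ffun gam ainf UR t) - fst (Ffun gam ainf UL t) /\
  s * (snd (Gfun gam ainf UR t) - snd (Gfun gam ainf UL t))
    = snd (Ffun gam ainf UR t) - snd (Ffun gam ainf UL t).

Definition lax_shock (gam ainf : R) (k : nat) (lam1 lam2 : state -> R -> R)
  (UL UR : state) (t : R) : Prop :=
  exists s, rankine_hugoniot gam ainf s UL UR t /\
  match k with
  | 1%nat => lam1 UR t < s < lam1 UL t /\ s < lam2 UR t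
  | _ => lam2 UR t < s < lam2 UL t /\ lam1 UL t < s
  end.

Definition wave_curve (gam ainf : R) (k : nat) (lam1 lam2 : state -> R -> R)
  (rk : state -> R -> state) (Phik : R -> state -> R -> state) : Prop :=
  exists delta, 0 < delta /\
  C2_family Phik delta /\
  forall a U t, Rabs a < delta -> in_box delta U -> 0 <= t < delta ->
    Phik 0 U t = U /\
    ex_derive (fun b => fst (Phik b U t)) 0 /\
    ex_derive (fun b => snd (Phik b U t)) 0 /\
    Derive (fun b => fst (Phik b U t)) 0 = fst (rk U t) /\
    Derive (fun b => snd (Phik b U t)) 0 = snd (rk U t) /\
    (a < 0 -> lax_shock gam ainf k lam1 lam2 U (Phik a U t) t) /\
    (0 < a -> exists c, 0 < c /\
       Derive (fun b => fst (Phik b U t)) a = c * fst (rk (Phik a U t) t) /\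
       Derive (fun b => snd (Phik b U t)) a = c * snd (rk (Phik a U t) t)).

Definition Phi_comp (Phi1 Phi2 : R -> state -> R -> state)
  (a1 a2 : R) (U : state) (t : R) : state :=
  Phi2 a2 (Phi1 a1 U t) t.

(* Main.v *)
Require Import Defs.
From Stdlib Require Import Reals Lra Psatz.
From Coquelicot Require Import Coquelicot.
Open Scope R_scope.


Lemma mvt (f : R -> R) a b :
  (forall x, Rmin a b <= x <= Rmax a b -> ex_derive f x) ->
  exists c, Rmin a b <= c <= Rmax a b /\ f b - f a = Derive f c * (b - a).
Proof.
  intros H.
  destruct (MVT_gen f a b (Derive f)) as [c [Hc Hf]].
  - intros x Hx. apply Derive_correct. apply H. lra.
  - intros x Hx. apply continuity_pt_filterlim.
    apply (ex_derive_continuous f x). apply H. exact Hx.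
  - exists c. split; assumption.
Qed.

Lemma dd (phi : R -> R -> R) a b s t :
  (forall x y, Rmin a b <= x <= Rmax a b -> Rmin s t <= y <= Rmax s t ->
    ex_derive (fun x' => phi x' y) x /\
    ex_derive (fun y' => Derive (fun x' => phi x' y') x) y) ->
  exists xi eta, Rmin a b <= xi <= Rmax a b /\ Rmin s t <= eta <= Rmax s t /\
   phi a t - phi a s - phi b t + phi b s
     = (a - b) * (t - s) * Derive (fun y' => Derive (fun x' => phi x' y') xi) eta.
Proof.
  intros H.
  assert (Hs : Rmin s t <= s <= Rmax s t) by (split; [apply Rmin_l | apply Rmax_l]).
  assert (Ht : Rmin s t <= t <= Rmax s t) by (split; [apply Rmin_r | apply Rmax_r]).
  destruct (mvt (fun x => phi x t - phi x s) b a) as [xi [Hxi Hm]].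
  { intros x Hx. apply (ex_derive_minus (fun x' => phi x' t) (fun x' => phi x' s)).
    - apply (H x t); [rewrite Rmin_comm, Rmax_comm; exact Hx| exact Ht].
    - apply (H x s); [rewrite Rmin_comm, Rmax_comm; exact Hx| exact Hs]. }
  rewrite Rmin_comm, Rmax_comm in Hxi.
  rewrite Derive_minus in Hm.
  2: { apply (H xi t); assumption. }
  2: { apply (H xi s); assumption. }
  destruct (mvt (fun y => Derive (fun x' => phi x' y) xi) s t) as [eta [Heta Hm2]].
  { intros y Hy. apply (H xi y); assumption. }
  exists xi, eta. split; [exact Hxi|]. split; [exact Heta|].
  simpl in Hm2. rewrite Hm2 in Hm. nra.
Qed.

Lemma dd_le (phi : R -> R -> R) a b s t M :
  (forall x y, Rmin a b <= x <= Rmax a b -> Rmin s t <= y <= Rmax s t ->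
    ex_derive (fun x' => phi x' y) x /\
    ex_derive (fun y' => Derive (fun x' => phi x' y') x) y /\
    Rabs (Derive (fun y' => Derive (fun x' => phi x' y') x) y) <= M) ->
  Rabs (phi a t - phi a s - phi b t + phi b s) <= Rabs (a - b) * Rabs (t - s) * M.
Proof.
  intros H.
  destruct (dd phi a b s t) as [xi [eta [H1 [H2 H3]]]].
  { intros x y Hx Hy. destruct (H x y Hx Hy) as [A [B _]]. split; assumption. }
  rewrite H3, !Rabs_mult.
  apply Rmult_le_compat_l.
  - apply Rmult_le_pos; apply Rabs_pos.
  - apply (H xi eta H1 H2).
Qed.

Lemma interval_abs a b x c d :
  Rabs (a - c) < d -> Rabs (b - c) < d -> Rmin a b <= x <= Rmax a b -> Rabs (x - c) < d.
Proof.
  intros Ha Hb Hx. unfold Rmin, Rmax in Hx.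
  destruct (Rle_dec a b); apply Rabs_def2 in Ha; apply Rabs_def2 in Hb;
  apply Rabs_def1; lra.
Qed.

Lemma interval_abs0 a b x d :
  Rabs a < d -> Rabs b < d -> Rmin a b <= x <= Rmax a b -> Rabs x < d.
Proof.
  intros Ha Hb Hx. unfold Rmin, Rmax in Hx.
  destruct (Rle_dec a b); apply Rabs_def2 in Ha; apply Rabs_def2 in Hb;
  apply Rabs_def1; lra.
Qed.

Lemma abs_le_sqrt a b : Rabs a <= sqrt (a ^ 2 + b ^ 2).
Proof.
  rewrite <- sqrt_Rsqr_abs. apply sqrt_le_1_alt.
  unfold Rsqr. nra.
Qed.
Lemma abs_le_sqrt' a b : Rabs b <= sqrt (a ^ 2 + b ^ 2).
Proof. rewrite Rplus_comm. apply abs_le_sqrt. Qed.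

Lemma Rabs_maj2 x : - x <= Rabs x.
Proof. rewrite <- Rabs_Ropp. apply Rle_abs. Qed.

Lemma abs_prod_le a b c : 0 <= c -> Rabs b <= c -> Rabs (a * b) <= Rabs a * c.
Proof. intros Hc Hb. rewrite Rabs_mult. apply Rmult_le_compat_l; [apply Rabs_pos|exact Hb]. Qed.

Lemma lin_core D S det x X1 X2 B1 B2 kappa E1 E2 :
  0 < D -> 1 <= S -> D / 2 <= Rabs det ->
  Rabs B1 + Rabs B2 <= 2 * S ->
  0 <= kappa -> kappa <= D / (16 * S) ->
  Rabs E1 <= kappa * Rabs x -> Rabs E2 <= kappa * Rabs x ->
  x * det = B2 * (X1 - E1) - B1 * (X2 - E2) ->
  Rabs x <= 8 * S / D * (Rabs X1 + Rabs X2).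
Proof.
  intros HD HS Hdet HB Hk Hk2 HE1 HE2 Heq.
  assert (H1 : Rabs x * Rabs det <= (Rabs B1 + Rabs B2) * (Rabs X1 + Rabs X2 + Rabs E1 + Rabs E2)).
  { rewrite <- Rabs_mult, Heq.
    assert (Rabs (B2 * (X1 - E1)) <= Rabs B2 * (Rabs X1 + Rabs E1)).
    { rewrite Rabs_mult. apply Rmult_le_compat_l; [apply Rabs_pos|].
      unfold Rminus. eapply Rle_trans; [apply Rabs_triang|]. rewrite Rabs_Ropp; lra. }
    assert (Rabs (B1 * (X2 - E2)) <= Rabs B1 * (Rabs X2 + Rabs E2)).
    { rewrite Rabs_mult. apply Rmult_le_compat_l; [apply Rabs_pos|].
      unfold Rminus. eapply Rle_trans; [apply Rabs_triang|]. rewrite Rabs_Ropp; lra. }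
    unfold Rminus at 1. eapply Rle_trans; [apply Rabs_triang|]. rewrite Rabs_Ropp.
    pose proof (Rabs_pos X1). pose proof (Rabs_pos X2). pose proof (Rabs_pos E1).
    pose proof (Rabs_pos E2). pose proof (Rabs_pos B1). pose proof (Rabs_pos B2). nra. }
  pose proof (Rabs_pos x). pose proof (Rabs_pos X1). pose proof (Rabs_pos X2).
  pose proof (Rabs_pos E1). pose proof (Rabs_pos E2).
  assert (Hk3 : 16 * S * kappa <= D).
  { apply (Rmult_le_compat_l (16*S)) in Hk2; [|lra].
    replace (16 * S * (D / (16 * S))) with D in Hk2 by (field; lra). lra. }
  assert (H2x : Rabs x * (D/2) <= 2 * S * (Rabs X1 + Rabs X2) + 4 * S * kappa * Rabs x).
  { assert (Rabs x * (D/2) <= Rabs x * Rabs det) by (apply Rmult_le_compat_l; lra).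
    assert ((Rabs B1 + Rabs B2) * (Rabs X1 + Rabs X2 + Rabs E1 + Rabs E2) <=
            2 * S * (Rabs X1 + Rabs X2 + Rabs E1 + Rabs E2)) by
      (apply Rmult_le_compat_r; lra).
    nra. }
  assert (H3x : Rabs x * D <= 8 * S * (Rabs X1 + Rabs X2)) by nra.
  apply (Rmult_le_reg_r D); [lra|].
  replace (8 * S / D * (Rabs X1 + Rabs X2) * D) with (8 * S * (Rabs X1 + Rabs X2)) by (field; lra).
  lra.
Qed.

Lemma lin_core2 D S det y X1 X2 A1 A2 kappa E1 E2 Zx :
  0 < D -> 1 <= S -> D / 2 <= Rabs det ->
  Rabs A1 + Rabs A2 <= 2 * S ->
  0 <= kappa -> kappa <= D / (16 * S) ->
  0 <= Zx -> Zx <= 8 * S / D * (Rabs X1 + Rabs X2) ->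
  Rabs E1 <= kappa * Zx -> Rabs E2 <= kappa * Zx ->
  y * det = A1 * (X2 - E2) - A2 * (X1 - E1) ->
  Rabs y <= 8 * S / D * (Rabs X1 + Rabs X2).
Proof.
  intros HD HS Hdet HB Hk Hk2 HZ HZ2 HE1 HE2 Heq.
  assert (H1 : Rabs y * Rabs det <= (Rabs A1 + Rabs A2) * (Rabs X1 + Rabs X2 + Rabs E1 + Rabs E2)).
  { rewrite <- Rabs_mult, Heq.
    assert (Rabs (A1 * (X2 - E2)) <= Rabs A1 * (Rabs X2 + Rabs E2)).
    { rewrite Rabs_mult. apply Rmult_le_compat_l; [apply Rabs_pos|].
      unfold Rminus. eapply Rle_trans; [apply Rabs_triang|]. rewrite Rabs_Ropp; lra. }
    assert (Rabs (A2 * (X1 - E1)) <= Rabs A2 * (Rabs X1 + Rabs E1)).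
    { rewrite Rabs_mult. apply Rmult_le_compat_l; [apply Rabs_pos|].
      unfold Rminus. eapply Rle_trans; [apply Rabs_triang|]. rewrite Rabs_Ropp; lra. }
    unfold Rminus at 1. eapply Rle_trans; [apply Rabs_triang|]. rewrite Rabs_Ropp.
    pose proof (Rabs_pos X1). pose proof (Rabs_pos X2). pose proof (Rabs_pos E1).
    pose proof (Rabs_pos E2). pose proof (Rabs_pos A1). pose proof (Rabs_pos A2). nra. }
  pose proof (Rabs_pos y). pose proof (Rabs_pos X1). pose proof (Rabs_pos X2).
  pose proof (Rabs_pos E1). pose proof (Rabs_pos E2).
  assert (Hk3 : 16 * S * kappa <= D).
  { apply (Rmult_le_compat_l (16*S)) in Hk2; [|lra].
    replace (16 * S * (D / (16 * S))) with D in Hk2 by (field; lra). lra. }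
  set (X := Rabs X1 + Rabs X2) in *.
  assert (HZ3 : Zx * D <= 8 * S * X).
  { apply (Rmult_le_compat_r D) in HZ2; [|lra].
    replace (8 * S / D * X * D) with (8 * S * X) in HZ2 by (field; lra). exact HZ2. }
  assert (H2x : Rabs y * (D/2) <= 2 * S * X + 4 * S * kappa * Zx).
  { assert (Rabs y * (D/2) <= Rabs y * Rabs det) by (apply Rmult_le_compat_l; lra).
    assert ((Rabs A1 + Rabs A2) * (X + Rabs E1 + Rabs E2) <=
            2 * S * (X + Rabs E1 + Rabs E2)) by
      (apply Rmult_le_compat_r; unfold X; lra).
    unfold X in *. nra. }
  assert (H4x : 4 * S * kappa * Zx * D <= 2 * S * X * D).
  { assert (4 * S * kappa * (Zx * D) <= D / 4 * (Zx * D)).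
    { apply Rmult_le_compat_r; [nra|lra]. }
    assert (D / 4 * (Zx * D) <= D / 4 * (8 * S * X)).
    { apply Rmult_le_compat_l; lra. }
    nra. }
  assert (H5x : 4 * S * kappa * Zx <= 2 * S * X).
  { apply (Rmult_le_reg_r D); lra. }
  assert (H3x : Rabs y * D <= 8 * S * X) by nra.
  apply (Rmult_le_reg_r D); [lra|].
  replace (8 * S / D * X * D) with (8 * S * X) by (field; lra).
  lra.
Qed.

Lemma linsolve p q u w A1 A2 B1 B2 E1 E2 x y eta kappa :
  p * w - q * u <> 0 ->
  0 < eta <= 1 ->
  eta <= Rabs (p * w - q * u) / (4 * (Rabs p + Rabs q + Rabs u + Rabs w + 1)) ->
  0 <= kappa <= Rabs (p * w - q * u) / (16 * (Rabs p + Rabs q + Rabs u + Rabs w + 1)) ->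
  Rabs (A1 - p) <= eta -> Rabs (A2 - q) <= eta -> Rabs (B1 - u) <= eta -> Rabs (B2 - w) <= eta ->
  Rabs E1 <= kappa * Rabs x -> Rabs E2 <= kappa * Rabs x ->
  let K := 8 * (Rabs p + Rabs q + Rabs u + Rabs w + 1) / Rabs (p * w - q * u) in
  Rabs x <= K * (Rabs (A1 * x + B1 * y + E1) + Rabs (A2 * x + B2 * y + E2)) /\
  Rabs y <= K * (Rabs (A1 * x + B1 * y + E1) + Rabs (A2 * x + B2 * y + E2)).
Proof.
  intros HD0 He He2 Hk H1 H2 H3 H4 HE1 HE2 K.
  set (S := Rabs p + Rabs q + Rabs u + Rabs w + 1) in *.
  set (D := Rabs (p * w - q * u)) in *.
  assert (HD : 0 < D) by (apply Rabs_pos_lt; exact HD0).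
  assert (HS : 1 <= S) by (unfold S; pose proof (Rabs_pos p); pose proof (Rabs_pos q);
     pose proof (Rabs_pos u); pose proof (Rabs_pos w); lra).
  set (det := A1 * B2 - A2 * B1).
  assert (Hdet : D / 2 <= Rabs det).
  { set (e1 := A1 - p) in *. set (e2 := A2 - q) in *. set (e3 := B1 - u) in *. set (e4 := B2 - w) in *.
    assert (Hdd : det - (p * w - q * u) = p * e4 + e1 * w + e1 * e4 - (q * e3 + e2 * u + e2 * e3))
      by (unfold det, e1, e2, e3, e4; ring).
    assert (He0 : 0 <= eta) by lra.
    pose proof (abs_prod_le p e4 eta He0 H4).
    pose proof (abs_prod_le w e1 eta He0 H1).
    pose proof (abs_prod_le e1 e4 eta He0 H4).
    pose proof (abs_prod_le q e3 eta He0 H3).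
    pose proof (abs_prod_le u e2 eta He0 H2).
    pose proof (abs_prod_le e2 e3 eta He0 H3).
    rewrite (Rmult_comm e1 w) in Hdd. rewrite (Rmult_comm e2 u) in Hdd.
    assert (Hb : Rabs (det - (p * w - q * u)) <= eta * (S + 1)).
    { rewrite Hdd. apply Rabs_le.
      pose proof (Rabs_pos p). pose proof (Rabs_pos q). pose proof (Rabs_pos u). pose proof (Rabs_pos w).
      assert (Rabs e1 * eta <= eta * eta) by (apply Rmult_le_compat_r; lra).
      assert (Rabs e2 * eta <= eta * eta) by (apply Rmult_le_compat_r; lra).
      assert (eta * eta <= eta) by nra.
      pose proof (Rle_abs (p*e4)). pose proof (Rabs_maj2 (p*e4)).
      pose proof (Rle_abs (w*e1)). pose proof (Rabs_maj2 (w*e1)).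
      pose proof (Rle_abs (e1*e4)). pose proof (Rabs_maj2 (e1*e4)).
      pose proof (Rle_abs (q*e3)). pose proof (Rabs_maj2 (q*e3)).
      pose proof (Rle_abs (u*e2)). pose proof (Rabs_maj2 (u*e2)).
      pose proof (Rle_abs (e2*e3)). pose proof (Rabs_maj2 (e2*e3)).
      unfold S. split; nra. }
    assert (Hb2 : eta * (S + 1) <= D / 2).
    { apply Rle_trans with (D / (4 * S) * (2 * S)).
      - apply Rmult_le_compat; lra.
      - right. field. lra. }
    pose proof (Rabs_triang_inv (p * w - q * u) (p*w - q*u - det)) as Htri.
    replace (p * w - q * u - (p * w - q * u - det)) with det in Htri by ring.
    rewrite <- Rabs_Ropp in Hb. replace (- (det - (p * w - q * u))) with (p * w - q * u - det) in Hb by ring.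
    fold D in Htri. lra. }
  assert (HB : Rabs B1 + Rabs B2 <= 2 * S).
  {
    pose proof (Rabs_triang (B1 - u) u). pose proof (Rabs_triang (B2 - w) w).
    replace (B1 - u + u) with B1 in * by ring. replace (B2 - w + w) with B2 in * by ring.
    unfold S. pose proof (Rabs_pos p). pose proof (Rabs_pos q). pose proof (Rabs_pos u). pose proof (Rabs_pos w). lra. }
  assert (HA : Rabs A1 + Rabs A2 <= 2 * S).
  { pose proof (Rabs_triang (A1 - p) p). pose proof (Rabs_triang (A2 - q) q).
    replace (A1 - p + p) with A1 in * by ring. replace (A2 - q + q) with A2 in * by ring.
    unfold S. pose proof (Rabs_pos p). pose proof (Rabs_pos q). pose proof (Rabs_pos u). pose proof (Rabs_pos w). lra. }
  assert (Hx : Rabs x <= 8 * S / D * (Rabs (A1 * x + B1 * y + E1) + Rabs (A2 * x + B2 * y + E2))).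
  { apply (lin_core D S det x _ _ B1 B2 kappa E1 E2); try lra; try assumption.
    unfold det; ring. }
  split.
  - exact Hx.
  - apply (lin_core2 D S det y _ _ A1 A2 kappa E1 E2 (Rabs x)); try lra; try assumption.
    + apply Rabs_pos.
    + unfold det; ring.
Qed.

Lemma alg_det a11 a12 a21 a22 l1 l2 p q u w c1 c2 e1 e2 :
  l1 < l2 -> a11 * p + a12 * q = l1 * (1 * p + 0 * q) ->
  a21 * p + a22 * q = l1 * (0 * p + 1 * q) ->
  a11 * u + a12 * w = l2 * (1 * u + 0 * w) -> a21 * u + a22 * w = l2 * (0 * u + 1 * w) ->
  c1 * p + c2 * q = 1 -> e1 * u + e2 * w = 1 -> p * w - q * u <> 0.
Proof.
  intros Hl H1 H2 H3 H4 N1 N2 Hd.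
  assert (Hpu : (l1 - l2) * (p * u) = 0).
  { assert (E : u * (a11 * p + a12 * q) - p * (a11 * u + a12 * w) = a12 * (q * u - p * w)) by ring.
    rewrite H1, H3 in E. replace (q * u - p * w) with (- (p * w - q * u)) in E by ring.
    rewrite Hd in E. nra. }
  assert (Hqw : (l1 - l2) * (q * w) = 0).
  { assert (E : w * (a21 * p + a22 * q) - q * (a21 * u + a22 * w) = a21 * (p * w - q * u)) by ring.
    rewrite H2, H4, Hd in E. nra. }
  assert (Hpw : (l1 - l2) * (p * w) = 0).
  { assert (E : w * (a11 * p + a12 * q) - q * (a11 * u + a12 * w) = a11 * (p * w - q * u)) by ring.
    rewrite H1, H3, Hd in E. assert (q * u = p * w) by lra.
    replace ((l1 - l2) * (p * w)) with (w * (l1 * (1 * p + 0 * q)) - q * (l2 * (1 * u + 0 * w))).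
    - rewrite E; ring.
    - ring_simplify. replace (q * l2 * u) with (l2 * (q * u)) by ring. rewrite H. ring. }
  assert (pu : p * u = 0) by (apply Rmult_integral in Hpu; destruct Hpu; [lra|auto]).
  assert (qw : q * w = 0) by (apply Rmult_integral in Hqw; destruct Hqw; [lra|auto]).
  assert (pw : p * w = 0) by (apply Rmult_integral in Hpw; destruct Hpw; [lra|auto]).
  assert (qu : q * u = 0) by lra.
  assert (E : (c1 * p + c2 * q) * (e1 * u + e2 * w) = 0).
  { ring_simplify. replace (c1 * p * e1 * u) with (c1 * e1 * (p * u)) by ring.
    replace (c1 * p * e2 * w) with (c1 * e2 * (p * w)) by ring.
    replace (c2 * q * e1 * u) with (c2 * e1 * (q * u)) by ring.
    replace (c2 * q * e2 * w) with (c2 * e2 * (q * w)) by ring.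
    rewrite pu, pw, qu, qw. ring. }
  rewrite N1, N2 in E. lra.
Qed.

Lemma dG0 gam ainf U :
  d_rho (fun W => fst (Gfun gam ainf W 0)) U = 1 /\
  d_v (fun W => fst (Gfun gam ainf W 0)) U = 0 /\
  d_rho (fun W => snd (Gfun gam ainf W 0)) U = 0 /\
  d_v (fun W => snd (Gfun gam ainf W 0)) U = 1.
Proof.
  unfold d_rho, d_v, Gfun; simpl. repeat split.
  - rewrite (Derive_ext _ (fun x => x)) by (intros; ring). apply Derive_id.
  - rewrite (Derive_ext _ (fun x => fst U)) by (intros; ring). apply Derive_const.
  - apply Derive_const.
  - apply Derive_id.
Qed.

Lemma det_r gam ainf lam1 lam2 r1 r2 :
  char_fields gam ainf lam1 lam2 r1 r2 ->
  fst (r1 Ubar 0) * snd (r2 Ubar 0) - snd (r1 Ubar 0) * fst (r2 Ubar 0) <> 0.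
Proof.
  intros [d [Hd H]].
  destruct (H Ubar 0) as [Hl [C1 [C2 [_ [_ [_ [_ [N1 N2]]]]]]]].
  - unfold in_box, Ubar; simpl. split; rewrite ?Rminus_diag, Rabs_R0; lra.
  - lra.
  - destruct (dG0 gam ainf Ubar) as [g1 [g2 [g3 g4]]].
    unfold char_pair in C1, C2. cbv zeta in C1, C2.
    rewrite g1, g2, g3, g4 in C1, C2.
    destruct C1 as [C1a C1b]. destruct C2 as [C2a C2b].
    eapply alg_det; [exact Hl | exact C1a | exact C1b | exact C2a | exact C2b | exact N1 | exact N2].
Qed.

Definition Near (d : R) (P : R -> R -> R -> R -> Prop) : Prop :=
  forall y1 y2 y3 y4, Rabs y1 < d -> Rabs (y2 - 1) < d -> Rabs y3 < d -> Rabs y4 < d ->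
    P y1 y2 y3 y4.

Lemma Near_mono d d' P : d' <= d -> Near d P -> Near d' P.
Proof. intros Hd H y1 y2 y3 y4 h1 h2 h3 h4. apply H; lra. Qed.

Lemma Near_cont h eps : cont4 h 0 1 0 0 -> 0 < eps ->
  exists d, 0 < d /\ Near d (fun a b c e => Rabs (h a b c e - h 0 1 0 0) < eps).
Proof.
  intros Hc He. destruct (Hc eps He) as [d [Hd H]]. exists d. split; auto.
  intros y1 y2 y3 y4 h1 h2 h3 h4. apply H; rewrite ?Rminus_0_r; auto.
Qed.

Lemma Near_bnd h M : cont4 h 0 1 0 0 -> Rabs (h 0 1 0 0) + 1 <= M ->
  exists d, 0 < d /\ Near d (fun a b c e => Rabs (h a b c e) <= M).
Proof.
  intros Hc HM. destruct (Near_cont h 1 Hc Rlt_0_1) as [d [Hd H]]. exists d. split; auto.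
  intros y1 y2 y3 y4 h1 h2 h3 h4. specialize (H y1 y2 y3 y4 h1 h2 h3 h4).
  pose proof (Rabs_triang_inv (h y1 y2 y3 y4) (h 0 1 0 0)). lra.
Qed.

Lemma C2_ex1 g a b c e i : C2_at g a b c e -> ex_pd i g a b c e.
Proof. intros H. exact (proj1 (proj2 H i)). Qed.
Lemma C2_ex2 g a b c e i j : C2_at g a b c e -> ex_pd j (pd i g) a b c e.
Proof. intros H. exact (proj1 (proj2 (proj2 (proj2 H i)) j)). Qed.
Lemma C2_c0 g a b c e : C2_at g a b c e -> cont4 g a b c e.
Proof. intros H. exact (proj1 H). Qed.
Lemma C2_c1 g a b c e i : C2_at g a b c e -> cont4 (pd i g) a b c e.
Proof. intros H. exact (proj1 (proj2 (proj2 H i))). Qed.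
Lemma C2_c2 g a b c e i j : C2_at g a b c e -> cont4 (pd j (pd i g)) a b c e.
Proof. intros H. exact (proj2 (proj2 (proj2 (proj2 H i)) j)). Qed.

Lemma Tlemma (g : R -> R -> R -> R -> R) d M x r v t :
  Near d (fun a b c e => C2_at g a b c e) ->
  Near d (fun a b c e => Rabs (pd 3 (pd 0 g) a b c e) <= M) ->
  0 < d -> Rabs x < d -> Rabs (r - 1) < d -> Rabs v < d -> 0 <= t < d ->
  Rabs (g x r v t - g x r v 0 - g 0 r v t + g 0 r v 0) <= Rabs x * t * M.
Proof.
  intros HC HM Hd Hx Hr Hv Ht.
  assert (H0 : Rabs 0 < d) by (rewrite Rabs_R0; lra).
  assert (Ht' : Rabs t < d) by (rewrite Rabs_pos_eq; lra).
  pose proof (dd_le (fun x' y' => g x' r v y') x 0 0 t M) as H.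
  simpl in H. rewrite !Rminus_0_r in H. rewrite (Rabs_pos_eq t) in H by lra.
  apply H. intros x' y' Hx' Hy'.
  pose proof (interval_abs0 _ _ _ _ Hx H0 Hx') as A.
  pose proof (interval_abs0 _ _ _ _ H0 Ht' Hy') as B.
  specialize (HC x' r v y' A Hr Hv B). specialize (HM x' r v y' A Hr Hv B).
  split; [exact (C2_ex1 g _ _ _ _ 0 HC)|]. split; [exact (C2_ex2 g _ _ _ _ 0 3 HC)|].
  exact HM.
Qed.

Lemma Elemma (g : R -> R -> R -> R -> R) d M x r v r' v' :
  Near d (fun a b c e => C2_at g a b c e) ->
  Near d (fun a b c e => Rabs (pd 1 (pd 0 g) a b c e) <= M) ->
  Near d (fun a b c e => Rabs (pd 2 (pd 0 g) a b c e) <= M) ->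
  0 < d -> Rabs x < d -> Rabs (r - 1) < d -> Rabs v < d -> Rabs (r' - 1) < d -> Rabs v' < d ->
  Rabs ((g x r v 0 - g x r' v' 0) - (g 0 r v 0 - g 0 r' v' 0))
    <= Rabs x * M * (Rabs (r - r') + Rabs (v - v')).
Proof.
  intros HC HM1 HM2 Hd Hx Hr Hv Hr' Hv'.
  assert (H0 : Rabs 0 < d) by (rewrite Rabs_R0; lra).
  assert (Hz : Rabs 0 < d) by (rewrite Rabs_R0; lra).
  pose proof (dd_le (fun x' y' => g x' y' v 0) x 0 r' r M) as H1.
  pose proof (dd_le (fun x' y' => g x' r' y' 0) x 0 v' v M) as H2.
  simpl in H1, H2. rewrite !Rminus_0_r in H1, H2.
  assert (E1 : Rabs (g x r v 0 - g x r' v 0 - g 0 r v 0 + g 0 r' v 0) <= Rabs x * Rabs (r - r') * M).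
  { apply H1. intros x' y' Hx' Hy'.
    pose proof (interval_abs0 _ _ _ _ Hx H0 Hx') as A.
    pose proof (interval_abs _ _ _ _ _ Hr' Hr Hy') as B.
    specialize (HC x' y' v 0 A B Hv Hz). specialize (HM1 x' y' v 0 A B Hv Hz).
    split; [exact (C2_ex1 g _ _ _ _ 0 HC)|]. split; [exact (C2_ex2 g _ _ _ _ 0 1 HC)|].
    exact HM1. }
  assert (E2 : Rabs (g x r' v 0 - g x r' v' 0 - g 0 r' v 0 + g 0 r' v' 0) <= Rabs x * Rabs (v - v') * M).
  { apply H2. intros x' y' Hx' Hy'.
    pose proof (interval_abs0 _ _ _ _ Hx H0 Hx') as A.
    pose proof (interval_abs0 _ _ _ _ Hv' Hv Hy') as B.
    specialize (HC x' r' y' 0 A Hr' B Hz). specialize (HM2 x' r' y' 0 A Hr' B Hz).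
    split; [exact (C2_ex1 g _ _ _ _ 0 HC)|]. split; [exact (C2_ex2 g _ _ _ _ 0 2 HC)|].
    exact HM2. }
  replace ((g x r v 0 - g x r' v' 0) - (g 0 r v 0 - g 0 r' v' 0)) with
    ((g x r v 0 - g x r' v 0 - g 0 r v 0 + g 0 r' v 0) + (g x r' v 0 - g x r' v' 0 - g 0 r' v 0 + g 0 r' v' 0)) by ring.
  eapply Rle_trans; [apply Rabs_triang|]. nra.
Qed.

Lemma Jlemma (g : R -> R -> R -> R -> R) d c0 eta x1 x2 r v :
  Near d (fun a b c e => C2_at g a b c e) ->
  Near d (fun a b c e => Rabs (pd 0 g a b c e - c0) < eta) ->
  0 < d -> Rabs x1 < d -> Rabs x2 < d -> Rabs (r - 1) < d -> Rabs v < d ->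
  exists A, Rabs (A - c0) < eta /\ g x2 r v 0 - g x1 r v 0 = A * (x2 - x1).
Proof.
  intros HC HE Hd H1 H2 Hr Hv.
  assert (Hz : Rabs 0 < d) by (rewrite Rabs_R0; lra).
  destruct (mvt (fun y => g y r v 0) x1 x2) as [c [Hc Heq]].
  { intros y Hy. pose proof (interval_abs0 _ _ _ _ H1 H2 Hy) as A.
    exact (C2_ex1 g _ _ _ _ 0 (HC y r v 0 A Hr Hv Hz)). }
  exists (Derive (fun y => g y r v 0) c). split; [|exact Heq].
  pose proof (interval_abs0 _ _ _ _ H1 H2 Hc) as A.
  exact (HE c r v 0 A Hr Hv Hz).
Qed.

Lemma comb_tau X Y t M T2 E X' V' :
  0 <= X <= 1 -> 0 <= Y -> 0 <= t -> 0 <= M ->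
  Rabs T2 <= Y * t * M -> Rabs E <= Y * M * (Rabs X' + Rabs V') ->
  Rabs X' <= X * t * M -> Rabs V' <= X * t * M ->
  Rabs (T2 + E + X') <= (M + 2 * M * M) * (X + Y) * t.
Proof.
  intros HX HY Ht HM H1 H2 H3 H4.
  assert (H5 : Y * M * (Rabs X' + Rabs V') <= Y * M * (2 * X * t * M)).
  { apply Rmult_le_compat_l; [nra|lra]. }
  assert (H6 : Y * M * (2 * X * t * M) <= 2 * M * M * Y * t).
  { assert (0 <= Y * M * M * t) by (repeat apply Rmult_le_pos; lra). nra. }
  eapply Rle_trans; [apply Rabs_triang|].
  eapply Rle_trans; [apply Rplus_le_compat_r; apply Rabs_triang|].
  assert (0 <= X * t * M * M) by (repeat apply Rmult_le_pos; lra).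
  assert (0 <= Y * t * M * M) by (repeat apply Rmult_le_pos; lra).
  nra.
Qed.

Lemma comb_E E Y M A1 A2 x p q eta eps1 S :
  Rabs E <= Y * M * (Rabs (A1 * x) + Rabs (A2 * x)) ->
  Rabs (A1 - p) < eta -> Rabs (A2 - q) < eta -> eta <= 1 -> 0 <= Y <= eps1 -> 0 <= M ->
  Rabs p + Rabs q + 2 <= 2 * S ->
  Rabs E <= eps1 * M * (2 * S) * Rabs x.
Proof.
  intros HE H1 H2 He HY HM HS.
  rewrite !Rabs_mult in HE.
  pose proof (Rabs_triang (A1 - p) p). pose proof (Rabs_triang (A2 - q) q).
  replace (A1 - p + p) with A1 in * by ring. replace (A2 - q + q) with A2 in * by ring.
  assert (HA : Rabs A1 + Rabs A2 <= 2 * S) by lra.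
  pose proof (Rabs_pos x). pose proof (Rabs_pos A1). pose proof (Rabs_pos A2).
  assert (Y * M * (Rabs A1 * Rabs x + Rabs A2 * Rabs x) <= eps1 * M * ((Rabs A1 + Rabs A2) * Rabs x)).
  { replace (Rabs A1 * Rabs x + Rabs A2 * Rabs x) with ((Rabs A1 + Rabs A2) * Rabs x) by ring.
    apply Rmult_le_compat_r; [nra|]. apply Rmult_le_compat_r; lra. }
  assert (eps1 * M * ((Rabs A1 + Rabs A2) * Rabs x) <= eps1 * M * (2 * S * Rabs x)).
  { apply Rmult_le_compat_l; [nra|]. apply Rmult_le_compat_r; lra. }
  nra.
Qed.

Lemma fin_a K K1 X Z1 Z2 P t :
  0 < K -> 0 < K1 -> 0 <= P -> 0 <= t ->
  X <= K * (Z1 + Z2) -> Z1 <= K1 * P * t -> Z2 <= K1 * P * t ->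
  X <= (2 * K * K1 + 2 * K + 1) * P * t.
Proof.
  intros HK HK1 HP Ht HX H1 H2.
  assert (0 <= P * t) by (apply Rmult_le_pos; lra).
  assert (K * (Z1 + Z2) <= K * (2 * K1 * P * t)) by (apply Rmult_le_compat_l; lra).
  assert (0 <= (2 * K + 1) * (P * t)) by (apply Rmult_le_pos; lra).
  replace ((2 * K * K1 + 2 * K + 1) * P * t) with (K * (2 * K1 * P * t) + (2 * K + 1) * (P * t)) by ring.
  lra.
Qed.

Lemma fin_b K K1 X Z1 Z2 P t dd :
  0 < K -> 0 < K1 -> 0 <= P -> 0 <= t -> 0 <= dd ->
  X <= K * (Z1 + Z2) -> Z1 <= dd + K1 * P * t -> Z2 <= dd + K1 * P * t ->
  X <= (2 * K * K1 + 2 * K + 1) * P * t + (2 * K * K1 + 2 * K + 1) * dd.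
Proof.
  intros HK HK1 HP Ht Hd HX H1 H2.
  assert (0 <= P * t) by (apply Rmult_le_pos; lra).
  assert (K * (Z1 + Z2) <= K * (2 * dd + 2 * K1 * P * t)) by (apply Rmult_le_compat_l; lra).
  assert (0 <= (2 * K + 1) * (P * t)) by (apply Rmult_le_pos; lra).
  assert (0 <= (2 * K * K1 + 1) * dd) by (apply Rmult_le_pos; nra).
  replace ((2 * K * K1 + 2 * K + 1) * P * t + (2 * K * K1 + 2 * K + 1) * dd) with
    (K * (2 * dd + 2 * K1 * P * t) + (2 * K + 1) * (P * t) + (2 * K * K1 + 1) * dd) by ring.
  lra.
Qed.

Lemma Rmin_le_l a b c : a <= c -> Rmin a b <= c.
Proof. intros; eapply Rle_trans; [apply Rmin_l|]; auto. Qed.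
Lemma Rmin_le_r a b c : b <= c -> Rmin a b <= c.
Proof. intros; eapply Rle_trans; [apply Rmin_r|]; auto. Qed.
Ltac smin := first [apply Rle_refl | apply Rmin_le_l; smin | apply Rmin_le_r; smin].
Ltac spos := repeat (apply Rmin_pos); assumption.

Theorem proposition3p2 (gam ainf : R) (Hgam : 1 < gam) (Hainf : 0 < ainf)
  (lam1 lam2 : state -> R -> R) (r1 r2 : state -> R -> state)
  (Phi1 Phi2 : R -> state -> R -> state) :
  char_fields gam ainf lam1 lam2 r1 r2 ->
  wave_curve gam ainf 1 lam1 lam2 r1 Phi1 ->
  wave_curve gam ainf 2 lam1 lam2 r2 Phi2 ->
  exists eps1 tau1 C, 0 < eps1 /\ 0 < tau1 /\ 0 < C /\
  forall tau, 0 < tau < tau1 ->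
  forall UL UhR UR : state,
    near_Ubar eps1 UL -> near_Ubar eps1 UhR -> near_Ubar eps1 UR ->
  forall a1 a2 b1 b2 : R,
    Rabs a1 < eps1 -> Rabs a2 < eps1 -> Rabs b1 < eps1 -> Rabs b2 < eps1 ->
    (* (a) *)
    (UR = Phi_comp Phi1 Phi2 b1 b2 UL 0 ->
     UR = Phi_comp Phi1 Phi2 a1 a2 UL (tau ^ 2) ->
     Rabs (b1 - a1) <= C * (Rabs a1 + Rabs a2) * tau ^ 2 /\
     Rabs (b2 - a2) <= C * (Rabs a1 + Rabs a2) * tau ^ 2) /\
    (* (b) *)
    (UR = Phi_comp Phi1 Phi2 b1 b2 UL 0 ->
     UhR = Phi_comp Phi1 Phi2 a1 a2 UL (tau ^ 2) ->
     Rabs (b1 - a1) <= C * (Rabs a1 + Rabs a2) * tau ^ 2 + C * dist2 UR UhR /\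
     Rabs (b2 - a2) <= C * (Rabs a1 + Rabs a2) * tau ^ 2 + C * dist2 UR UhR).
Proof.
  intros Hcf Hw1 Hw2.
  pose proof (det_r _ _ _ _ _ _ Hcf) as HD0.
  destruct Hw1 as [d1 [Hd1 [HC1 Hw1]]].
  destruct Hw2 as [d2 [Hd2 [HC2 Hw2]]].
  pose (G1r := fun a r v t => fst (Phi1 a (r, v) t)).
  pose (G1v := fun a r v t => snd (Phi1 a (r, v) t)).
  pose (G2r := fun a r v t => fst (Phi2 a (r, v) t)).
  pose (G2v := fun a r v t => snd (Phi2 a (r, v) t)).
  set (p := fst (r1 Ubar 0)) in *. set (q := snd (r1 Ubar 0)) in *.
  set (u := fst (r2 Ubar 0)) in *. set (w := snd (r2 Ubar 0)) in *.
  set (S := Rabs p + Rabs q + Rabs u + Rabs w + 1).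
  set (D := Rabs (p * w - q * u)).
  assert (HD : 0 < D) by (apply Rabs_pos_lt; exact HD0).
  assert (HS : 1 <= S) by (unfold S; pose proof (Rabs_pos p); pose proof (Rabs_pos q);
     pose proof (Rabs_pos u); pose proof (Rabs_pos w); lra).
  set (eta := Rmin 1 (D / (4 * S))).
  assert (Heta : 0 < eta <= 1).
  { split; [apply Rmin_pos; [lra| apply Rdiv_lt_0_compat; lra] | apply Rmin_l]. }
  assert (Heta2 : eta <= D / (4 * S)) by apply Rmin_r.
  assert (Hbox1 : Rabs 0 < d1 /\ Rabs (1 - 1) < d1) by (rewrite Rminus_diag, Rabs_R0; lra).
  assert (Hbox2 : Rabs 0 < d2 /\ Rabs (1 - 1) < d2) by (rewrite Rminus_diag, Rabs_R0; lra).
  destruct Hbox1 as [Hz1 Ho1]. destruct Hbox2 as [Hz2 Ho2].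
  destruct (HC1 0 1 0 0 Hz1 Ho1 Hz1 Hz1) as [CB1r CB1v].
  destruct (HC2 0 1 0 0 Hz2 Ho2 Hz2 Hz2) as [CB2r CB2v].
  assert (NC1r : Near d1 (fun a b c e => C2_at G1r a b c e))
    by (intros y1 y2 y3 y4 h1 h2 h3 h4; exact (proj1 (HC1 y1 y2 y3 y4 h1 h2 h3 h4))).
  assert (NC1v : Near d1 (fun a b c e => C2_at G1v a b c e))
    by (intros y1 y2 y3 y4 h1 h2 h3 h4; exact (proj2 (HC1 y1 y2 y3 y4 h1 h2 h3 h4))).
  assert (NC2r : Near d2 (fun a b c e => C2_at G2r a b c e))
    by (intros y1 y2 y3 y4 h1 h2 h3 h4; exact (proj1 (HC2 y1 y2 y3 y4 h1 h2 h3 h4))).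
  assert (NC2v : Near d2 (fun a b c e => C2_at G2v a b c e))
    by (intros y1 y2 y3 y4 h1 h2 h3 h4; exact (proj2 (HC2 y1 y2 y3 y4 h1 h2 h3 h4))).
  assert (HUbar1 : in_box d1 Ubar) by (unfold in_box, Ubar; cbn [fst snd]; split; lra).
  assert (HUbar2 : in_box d2 Ubar) by (unfold in_box, Ubar; cbn [fst snd]; split; lra).
  destruct (Hw1 0 Ubar 0 Hz1 HUbar1 (conj (Rle_refl 0) Hd1)) as [B1e [_ [_ [B1r [B1v _]]]]].
  destruct (Hw2 0 Ubar 0 Hz2 HUbar2 (conj (Rle_refl 0) Hd2)) as [B2e [_ [_ [B2r [B2v _]]]]].
  assert (EB1r : pd 0 G1r 0 1 0 0 = p) by exact B1r.
  assert (EB1v : pd 0 G1v 0 1 0 0 = q) by exact B1v.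
  assert (EB2r : pd 0 G2r 0 1 0 0 = u) by exact B2r.
  assert (EB2v : pd 0 G2v 0 1 0 0 = w) by exact B2v.
  destruct (Near_cont (pd 0 G1r) eta (C2_c1 _ _ _ _ _ 0 CB1r) (proj1 Heta)) as [e1 [He1 NE1]].
  destruct (Near_cont (pd 0 G1v) eta (C2_c1 _ _ _ _ _ 0 CB1v) (proj1 Heta)) as [e2 [He2 NE2]].
  destruct (Near_cont (pd 0 G2r) eta (C2_c1 _ _ _ _ _ 0 CB2r) (proj1 Heta)) as [e3 [He3 NE3]].
  destruct (Near_cont (pd 0 G2v) eta (C2_c1 _ _ _ _ _ 0 CB2v) (proj1 Heta)) as [e4 [He4 NE4]].
  rewrite EB1r in NE1. rewrite EB1v in NE2. rewrite EB2r in NE3. rewrite EB2v in NE4.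
  set (M := (Rabs (pd 3 (pd 0 G1r) 0 1 0 0) + 1) + (Rabs (pd 3 (pd 0 G1v) 0 1 0 0) + 1)
          + (Rabs (pd 3 (pd 0 G2r) 0 1 0 0) + 1) + (Rabs (pd 3 (pd 0 G2v) 0 1 0 0) + 1)
          + (Rabs (pd 1 (pd 0 G2r) 0 1 0 0) + 1) + (Rabs (pd 1 (pd 0 G2v) 0 1 0 0) + 1)
          + (Rabs (pd 2 (pd 0 G2r) 0 1 0 0) + 1) + (Rabs (pd 2 (pd 0 G2v) 0 1 0 0) + 1)).
  pose proof (Rabs_pos (pd 3 (pd 0 G1r) 0 1 0 0)). pose proof (Rabs_pos (pd 3 (pd 0 G1v) 0 1 0 0)).
  pose proof (Rabs_pos (pd 3 (pd 0 G2r) 0 1 0 0)). pose proof (Rabs_pos (pd 3 (pd 0 G2v) 0 1 0 0)).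
  pose proof (Rabs_pos (pd 1 (pd 0 G2r) 0 1 0 0)). pose proof (Rabs_pos (pd 1 (pd 0 G2v) 0 1 0 0)).
  pose proof (Rabs_pos (pd 2 (pd 0 G2r) 0 1 0 0)). pose proof (Rabs_pos (pd 2 (pd 0 G2v) 0 1 0 0)).
  assert (HM : 8 <= M) by (unfold M; lra).
  destruct (Near_bnd (pd 3 (pd 0 G1r)) M (C2_c2 _ _ _ _ _ 0 3 CB1r) ltac:(unfold M; lra)) as [m1 [Hm1 NM1]].
  destruct (Near_bnd (pd 3 (pd 0 G1v)) M (C2_c2 _ _ _ _ _ 0 3 CB1v) ltac:(unfold M; lra)) as [m2 [Hm2 NM2]].
  destruct (Near_bnd (pd 3 (pd 0 G2r)) M (C2_c2 _ _ _ _ _ 0 3 CB2r) ltac:(unfold M; lra)) as [m3 [Hm3 NM3]].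
  destruct (Near_bnd (pd 3 (pd 0 G2v)) M (C2_c2 _ _ _ _ _ 0 3 CB2v) ltac:(unfold M; lra)) as [m4 [Hm4 NM4]].
  destruct (Near_bnd (pd 1 (pd 0 G2r)) M (C2_c2 _ _ _ _ _ 0 1 CB2r) ltac:(unfold M; lra)) as [m5 [Hm5 NM5]].
  destruct (Near_bnd (pd 1 (pd 0 G2v)) M (C2_c2 _ _ _ _ _ 0 1 CB2v) ltac:(unfold M; lra)) as [m6 [Hm6 NM6]].
  destruct (Near_bnd (pd 2 (pd 0 G2r)) M (C2_c2 _ _ _ _ _ 0 2 CB2r) ltac:(unfold M; lra)) as [m7 [Hm7 NM7]].
  destruct (Near_bnd (pd 2 (pd 0 G2v)) M (C2_c2 _ _ _ _ _ 0 2 CB2v) ltac:(unfold M; lra)) as [m8 [Hm8 NM8]].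
  set (d0 := Rmin (Rmin d1 d2) (Rmin (Rmin (Rmin e1 e2) (Rmin e3 e4))
              (Rmin (Rmin (Rmin m1 m2) (Rmin m3 m4)) (Rmin (Rmin m5 m6) (Rmin m7 m8))))).
  assert (Hd0 : 0 < d0) by (unfold d0; spos).
  apply (Near_mono _ d0) in NC1r; [|unfold d0; smin].
  apply (Near_mono _ d0) in NC1v; [|unfold d0; smin].
  apply (Near_mono _ d0) in NC2r; [|unfold d0; smin].
  apply (Near_mono _ d0) in NC2v; [|unfold d0; smin].
  apply (Near_mono _ d0) in NE1; [|unfold d0; smin].
  apply (Near_mono _ d0) in NE2; [|unfold d0; smin].
  apply (Near_mono _ d0) in NE3; [|unfold d0; smin].
  apply (Near_mono _ d0) in NE4; [|unfold d0; smin].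
  apply (Near_mono _ d0) in NM1; [|unfold d0; smin].
  apply (Near_mono _ d0) in NM2; [|unfold d0; smin].
  apply (Near_mono _ d0) in NM3; [|unfold d0; smin].
  apply (Near_mono _ d0) in NM4; [|unfold d0; smin].
  apply (Near_mono _ d0) in NM5; [|unfold d0; smin].
  apply (Near_mono _ d0) in NM6; [|unfold d0; smin].
  apply (Near_mono _ d0) in NM7; [|unfold d0; smin].
  apply (Near_mono _ d0) in NM8; [|unfold d0; smin].
  assert (Hd01 : d0 <= d1) by (unfold d0; smin).
  assert (Hd02 : d0 <= d2) by (unfold d0; smin).
  destruct (Near_cont G1r d0 (C2_c0 _ _ _ _ _ CB1r) Hd0) as [f1 [Hf1 NW1]].
  destruct (Near_cont G1v d0 (C2_c0 _ _ _ _ _ CB1v) Hd0) as [f2 [Hf2 NW2]].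
  assert (EG1r : G1r 0 1 0 0 = 1) by (change (fst (Phi1 0 Ubar 0) = 1); rewrite B1e; reflexivity).
  assert (EG1v : G1v 0 1 0 0 = 0) by (change (snd (Phi1 0 Ubar 0) = 0); rewrite B1e; reflexivity).
  rewrite EG1r in NW1. rewrite EG1v in NW2.
  assert (Id1 : forall r v s, Rabs (r - 1) < d0 -> Rabs v < d0 -> 0 <= s < d0 ->
            G1r 0 r v s = r /\ G1v 0 r v s = v).
  { intros r v s h1 h2 h3. destruct (Hw1 0 (r, v) s) as [E _].
    - lra. - unfold in_box; cbn [fst snd]; split; lra. - lra.
    - unfold G1r, G1v; rewrite E; split; reflexivity. }
  assert (Id2 : forall r v s, Rabs (r - 1) < d0 -> Rabs v < d0 -> 0 <= s < d0 ->
            G2r 0 r v s = r /\ G2v 0 r v s = v).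
  { intros r v s h1 h2 h3. destruct (Hw2 0 (r, v) s) as [E _].
    - lra. - unfold in_box; cbn [fst snd]; split; lra. - lra.
    - unfold G2r, G2v; rewrite E; split; reflexivity. }
  set (eps1 := Rmin (Rmin d0 (Rmin f1 f2)) (Rmin 1 (D / (32 * S * S * (M + 1))))).
  assert (Heps1 : 0 < eps1).
  { unfold eps1. repeat apply Rmin_pos; try assumption; try lra.
    apply Rdiv_lt_0_compat; [lra|]. apply Rmult_lt_0_compat; [nra|lra]. }
  assert (He0 : eps1 <= d0) by (unfold eps1; smin).
  assert (Hef1 : eps1 <= f1) by (unfold eps1; smin).
  assert (Hef2 : eps1 <= f2) by (unfold eps1; smin).
  assert (He1' : eps1 <= 1) by (unfold eps1; smin).
  assert (HeD : eps1 <= D / (32 * S * S * (M + 1))) by (unfold eps1; smin).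
  set (kappa := eps1 * M * (2 * S)).
  assert (Hkappa : 0 <= kappa <= D / (16 * S)).
  { split. { unfold kappa. apply Rmult_le_pos; [apply Rmult_le_pos|]; lra. }
    unfold kappa.
    apply Rle_trans with (D / (32 * S * S * (M + 1)) * M * (2 * S)).
    - apply Rmult_le_compat_r; [lra|]. apply Rmult_le_compat_r; lra.
    - replace (D / (32 * S * S * (M + 1)) * M * (2 * S)) with (D / (16 * S) * (M / (M + 1)))
        by (field; lra).
      rewrite <- (Rmult_1_r (D / (16 * S))) at 2.
      apply Rmult_le_compat_l; [apply Rlt_le, Rdiv_lt_0_compat; lra|].
      apply Rmult_le_reg_r with (M + 1); [lra|].
      unfold Rdiv. rewrite Rmult_assoc, Rinv_l; lra. }
  set (K := 8 * S / D).
  assert (HK : 0 < K) by (unfold K; apply Rdiv_lt_0_compat; lra).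
  set (K1 := M + 2 * M * M).
  assert (HK1 : 0 < K1) by (unfold K1; nra).
  exists eps1, eps1, (2 * K * K1 + 2 * K + 1).
  split; [exact Heps1|]. split; [exact Heps1|]. split; [nra|].
  intros tau Htau [rL vL] UhR UR HL HhR HR a1 a2 b1 b2 Ha1 Ha2 Hb1 Hb2.
  set (t := tau ^ 2).
  assert (Ht : 0 <= t < eps1) by (unfold t; split; nra).
  unfold near_Ubar, dist2, Ubar in HL. cbn [fst snd] in HL.
  pose proof (abs_le_sqrt (rL - 1) (vL - 0)) as HrL.
  pose proof (abs_le_sqrt' (rL - 1) (vL - 0)) as HvL.
  rewrite Rminus_0_r in HvL. rewrite Rminus_0_r in HL, HrL.

  assert (HrL' : Rabs (rL - 1) < eps1) by lra.
  assert (HvL' : Rabs vL < eps1) by lra.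
  assert (Hz : Rabs 0 < d0) by (rewrite Rabs_R0; lra).
  assert (Htd : Rabs t < d0) by (rewrite Rabs_pos_eq; lra).
  assert (Ht0 : Rabs 0 < f1 /\ Rabs 0 < f2) by (rewrite Rabs_R0; lra).
  assert (Htf : Rabs t < f1 /\ Rabs t < f2) by (rewrite Rabs_pos_eq; lra).
  destruct Ht0 as [Ht0a Ht0b]. destruct Htf as [Htfa Htfb].
  destruct (Phi1 a1 (rL, vL) t) as [rta vta] eqn:Eta.
  destruct (Phi1 a1 (rL, vL) 0) as [r0a v0a] eqn:E0a.
  destruct (Phi1 b1 (rL, vL) 0) as [r0b v0b] eqn:E0b.
  assert (GTr : G1r a1 rL vL t = rta) by (unfold G1r; rewrite Eta; reflexivity).
  assert (GTv : G1v a1 rL vL t = vta) by (unfold G1v; rewrite Eta; reflexivity).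
  assert (GAr : G1r a1 rL vL 0 = r0a) by (unfold G1r; rewrite E0a; reflexivity).
  assert (GAv : G1v a1 rL vL 0 = v0a) by (unfold G1v; rewrite E0a; reflexivity).
  assert (GBr : G1r b1 rL vL 0 = r0b) by (unfold G1r; rewrite E0b; reflexivity).
  assert (GBv : G1v b1 rL vL 0 = v0b) by (unfold G1v; rewrite E0b; reflexivity).
  pose proof (NW1 a1 rL vL t ltac:(lra) ltac:(lra) ltac:(lra) Htfa) as Rta.
  pose proof (NW2 a1 rL vL t ltac:(lra) ltac:(lra) ltac:(lra) Htfb) as Vta.
  pose proof (NW1 a1 rL vL 0 ltac:(lra) ltac:(lra) ltac:(lra) Ht0a) as R0a.
  pose proof (NW2 a1 rL vL 0 ltac:(lra) ltac:(lra) ltac:(lra) Ht0b) as V0a.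
  pose proof (NW1 b1 rL vL 0 ltac:(lra) ltac:(lra) ltac:(lra) Ht0a) as R0b.
  pose proof (NW2 b1 rL vL 0 ltac:(lra) ltac:(lra) ltac:(lra) Ht0b) as V0b.
  cbv beta in Rta, Vta, R0a, V0a, R0b, V0b.
  rewrite GTr in Rta. rewrite GTv, Rminus_0_r in Vta.
  rewrite GAr in R0a. rewrite GAv, Rminus_0_r in V0a.
  rewrite GBr in R0b. rewrite GBv, Rminus_0_r in V0b.
  assert (Ht' : 0 <= t < d0) by lra.
  assert (Hz' : 0 <= 0 < d0) by lra.
  destruct (Id1 rL vL t ltac:(lra) ltac:(lra) Ht') as [I1r I1v].
  destruct (Id1 rL vL 0 ltac:(lra) ltac:(lra) Hz') as [I0r I0v].
  destruct (Id2 rta vta t Rta Vta Ht') as [J1r J1v].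
  destruct (Id2 rta vta 0 Rta Vta Hz') as [J2r J2v].
  destruct (Id2 r0a v0a 0 R0a V0a Hz') as [J3r J3v].
  destruct (Id2 r0b v0b 0 R0b V0b Hz') as [J4r J4v].
  pose proof (Tlemma G1r d0 M a1 rL vL t NC1r NM1 Hd0 ltac:(lra) ltac:(lra) ltac:(lra) Ht') as T1r.
  pose proof (Tlemma G1v d0 M a1 rL vL t NC1v NM2 Hd0 ltac:(lra) ltac:(lra) ltac:(lra) Ht') as T1v.
  rewrite GTr, GAr, I1r, I0r in T1r. rewrite GTv, GAv, I1v, I0v in T1v.
  replace (rta - r0a - rL + rL) with (rta - r0a) in T1r by ring.
  replace (vta - v0a - vL + vL) with (vta - v0a) in T1v by ring.
  assert (Ha1' : 0 <= Rabs a1 <= 1) by (split; [apply Rabs_pos | lra]).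
  assert (Ha2' : 0 <= Rabs a2) by apply Rabs_pos.
  assert (HM0 : 0 <= M) by lra.
  assert (Tr : Rabs (G2r a2 rta vta t - G2r a2 r0a v0a 0) <= K1 * (Rabs a1 + Rabs a2) * t).
  { pose proof (Tlemma G2r d0 M a2 rta vta t NC2r NM3 Hd0 ltac:(lra) Rta Vta Ht') as T2.
    pose proof (Elemma G2r d0 M a2 rta vta r0a v0a NC2r NM5 NM7 Hd0 ltac:(lra) Rta Vta R0a V0a) as E2.
    replace (G2r a2 rta vta t - G2r a2 r0a v0a 0) with
      ((G2r a2 rta vta t - G2r a2 rta vta 0 - G2r 0 rta vta t + G2r 0 rta vta 0)
       + ((G2r a2 rta vta 0 - G2r a2 r0a v0a 0) - (G2r 0 rta vta 0 - G2r 0 r0a v0a 0))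
       + (rta - r0a)) by (rewrite J1r, J2r, J3r; ring).
    unfold K1. apply (comb_tau _ _ _ _ _ _ _ (vta - v0a)); try assumption; lra. }
  assert (Tv : Rabs (G2v a2 rta vta t - G2v a2 r0a v0a 0) <= K1 * (Rabs a1 + Rabs a2) * t).
  { pose proof (Tlemma G2v d0 M a2 rta vta t NC2v NM4 Hd0 ltac:(lra) Rta Vta Ht') as T2.
    pose proof (Elemma G2v d0 M a2 rta vta r0a v0a NC2v NM6 NM8 Hd0 ltac:(lra) Rta Vta R0a V0a) as E2.
    replace (G2v a2 rta vta t - G2v a2 r0a v0a 0) with
      ((G2v a2 rta vta t - G2v a2 rta vta 0 - G2v 0 rta vta t + G2v 0 rta vta 0)
       + ((G2v a2 rta vta 0 - G2v a2 r0a v0a 0) - (G2v 0 rta vta 0 - G2v 0 r0a v0a 0))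
       + (vta - v0a)) by (rewrite J1v, J2v, J3v; ring).
    unfold K1. rewrite (Rplus_comm (Rabs (rta - r0a))) in E2.
    apply (comb_tau _ _ _ _ _ _ _ (rta - r0a)); try assumption; lra. }
  destruct (Jlemma G2r d0 u eta a2 b2 r0b v0b NC2r NE3 Hd0 ltac:(lra) ltac:(lra) R0b V0b) as [B1 [HB1 JB1]].
  destruct (Jlemma G2v d0 w eta a2 b2 r0b v0b NC2v NE4 Hd0 ltac:(lra) ltac:(lra) R0b V0b) as [B2 [HB2 JB2]].
  destruct (Jlemma G1r d0 p eta a1 b1 rL vL NC1r NE1 Hd0 ltac:(lra) ltac:(lra) ltac:(lra) ltac:(lra)) as [A1 [HA1 JA1]].
  destruct (Jlemma G1v d0 q eta a1 b1 rL vL NC1v NE2 Hd0 ltac:(lra) ltac:(lra) ltac:(lra) ltac:(lra)) as [A2 [HA2 JA2]].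
  rewrite GBr, GAr in JA1. rewrite GBv, GAv in JA2.
  pose proof (Elemma G2r d0 M a2 r0b v0b r0a v0a NC2r NM5 NM7 Hd0 ltac:(lra) R0b V0b R0a V0a) as ER.
  pose proof (Elemma G2v d0 M a2 r0b v0b r0a v0a NC2v NM6 NM8 Hd0 ltac:(lra) R0b V0b R0a V0a) as EV.
  set (E1 := (G2r a2 r0b v0b 0 - G2r a2 r0a v0a 0) - (G2r 0 r0b v0b 0 - G2r 0 r0a v0a 0)) in ER.
  set (E2 := (G2v a2 r0b v0b 0 - G2v a2 r0a v0a 0) - (G2v 0 r0b v0b 0 - G2v 0 r0a v0a 0)) in EV.
  rewrite JA1, JA2 in ER, EV.
  assert (HS2 : Rabs p + Rabs q + 2 <= 2 * S) by (unfold S; pose proof (Rabs_pos p); pose proof (Rabs_pos q); pose proof (Rabs_pos u); pose proof (Rabs_pos w); lra).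
  assert (HE1 : Rabs E1 <= kappa * Rabs (b1 - a1)).
  { unfold kappa. apply (comb_E E1 (Rabs a2) M A1 A2 (b1 - a1) p q eta eps1 S); try assumption; lra. }
  assert (HE2 : Rabs E2 <= kappa * Rabs (b1 - a1)).
  { unfold kappa. apply (comb_E E2 (Rabs a2) M A1 A2 (b1 - a1) p q eta eps1 S); try assumption; lra. }
  assert (DR : G2r b2 r0b v0b 0 - G2r a2 r0a v0a 0 = A1 * (b1 - a1) + B1 * (b2 - a2) + E1).
  { unfold E1. rewrite J4r, J3r, <- JB1, <- JA1. ring. }
  assert (DV : G2v b2 r0b v0b 0 - G2v a2 r0a v0a 0 = A2 * (b1 - a1) + B2 * (b2 - a2) + E2).
  { unfold E2. rewrite J4v, J3v, <- JB2, <- JA2. ring. }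
  assert (LS : Rabs (b1 - a1) <= K * (Rabs (A1 * (b1 - a1) + B1 * (b2 - a2) + E1) + Rabs (A2 * (b1 - a1) + B2 * (b2 - a2) + E2)) /\
               Rabs (b2 - a2) <= K * (Rabs (A1 * (b1 - a1) + B1 * (b2 - a2) + E1) + Rabs (A2 * (b1 - a1) + B2 * (b2 - a2) + E2))).
  { exact (linsolve p q u w A1 A2 B1 B2 E1 E2 (b1 - a1) (b2 - a2) eta kappa HD0 Heta Heta2 Hkappa
       (Rlt_le _ _ HA1) (Rlt_le _ _ HA2) (Rlt_le _ _ HB1) (Rlt_le _ _ HB2) HE1 HE2). }
  rewrite <- DR, <- DV in LS. destruct LS as [LX LY].
  assert (HP : 0 <= Rabs a1 + Rabs a2) by lra.
  split.
  - intros HUb HUa. unfold Phi_comp in HUb, HUa. rewrite E0b in HUb. rewrite Eta in HUa.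
    assert (FR1 : fst UR = G2r b2 r0b v0b 0) by (rewrite HUb; reflexivity).
    assert (FR2 : fst UR = G2r a2 rta vta t) by (rewrite HUa; reflexivity).
    assert (FV1 : snd UR = G2v b2 r0b v0b 0) by (rewrite HUb; reflexivity).
    assert (FV2 : snd UR = G2v a2 rta vta t) by (rewrite HUa; reflexivity).
    rewrite <- FR1, FR2, <- FV1, FV2 in LX, LY.
    split.
    + exact (fin_a K K1 _ _ _ _ t HK HK1 HP (proj1 Ht) LX Tr Tv).
    + exact (fin_a K K1 _ _ _ _ t HK HK1 HP (proj1 Ht) LY Tr Tv).
  - intros HUb HUh. unfold Phi_comp in HUb, HUh. rewrite E0b in HUb. rewrite Eta in HUh.
    assert (FR1 : fst UR = G2r b2 r0b v0b 0) by (rewrite HUb; reflexivity).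
    assert (FR2 : fst UhR = G2r a2 rta vta t) by (rewrite HUh; reflexivity).
    assert (FV1 : snd UR = G2v b2 r0b v0b 0) by (rewrite HUb; reflexivity).
    assert (FV2 : snd UhR = G2v a2 rta vta t) by (rewrite HUh; reflexivity).
    rewrite <- FR1, <- FV1 in LX, LY.
    assert (Hdd : 0 <= dist2 UR UhR) by (unfold dist2; apply sqrt_pos).
    assert (Z1 : Rabs (fst UR - G2r a2 r0a v0a 0) <= dist2 UR UhR + K1 * (Rabs a1 + Rabs a2) * t).
    { replace (fst UR - G2r a2 r0a v0a 0) with ((fst UR - fst UhR) + (G2r a2 rta vta t - G2r a2 r0a v0a 0))
        by (rewrite FR2; ring).
      eapply Rle_trans; [apply Rabs_triang|]. apply Rplus_le_compat; [|exact Tr].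
      apply abs_le_sqrt. }
    assert (Z2 : Rabs (snd UR - G2v a2 r0a v0a 0) <= dist2 UR UhR + K1 * (Rabs a1 + Rabs a2) * t).
    { replace (snd UR - G2v a2 r0a v0a 0) with ((snd UR - snd UhR) + (G2v a2 rta vta t - G2v a2 r0a v0a 0))
        by (rewrite FV2; ring).
      eapply Rle_trans; [apply Rabs_triang|]. apply Rplus_le_compat; [|exact Tv].
      apply abs_le_sqrt'. }
    split.
    + exact (fin_b K K1 _ _ _ _ t _ HK HK1 HP (proj1 Ht) Hdd LX Z1 Z2).
    + exact (fin_b K K1 _ _ _ _ t _ HK HK1 HP (proj1 Ht) Hdd LY Z1 Z2).
Qed.
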